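(* Let $d,r,s$ be positive integers with $r\ge s$, let $c$ be an integer with $|c|\le d$, and let $a_1,\dots,a_r$ and $b_1,\dots,b_s$ be integers, none divisible by $3$, with $1\le a_i\le d$ and $1\le b_i\le d$ for all $i$. If $$a_1 3^{2rd}+a_2 3^{2(r-1)d}+\dots+a_r3^{2d}=b_13^{n_1}+b_23^{n_2}+\dots+b_s3^{n_s}+c$$ for integers $n_1>n_2>\dots>n_s\ge0$, then $r=s$, $c=0$, and $a_i=b_i$ and $n_i=2d(r+1-i)$ for $i=1,\dots,r$. *)

(* Defs.v *)
From Stdlib Require Import ZArith Lia.
Open Scope Z_scope.

Fixpoint zsum (f : nat -> Z) (m : nat) : Z :=
  match m with
  | O => 0
  | S k => zsum f k + f (S k)
  end.

(* Main.v *)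
Require Import Defs.
From Stdlib Require Import ZArith Lia List Sorting.Sorted Classical.
Import ListNotations.
Open Scope Z_scope.

Definition good (d x : Z) := ~ (3 | x) /\ 1 <= x <= d.
Definition goodp (d : Z) (p : Z*Z) := good d (fst p) /\ 0 <= snd p.
Definition dec (p q : Z*Z) := snd q < snd p.
Fixpoint sumP (l : list (Z*Z)) : Z :=
  match l with [] => 0 | p :: l' => fst p * 3 ^ snd p + sumP l' end.
Fixpoint lterms (D k0 : Z) (A : list Z) : list (Z*Z) :=
  match A with [] => [] | x :: A' => (x, D * (k0 + Z.of_nat (S (length A')))) :: lterms D k0 A' end.
Definition cnt (lo hi : Z) (l : list (Z*Z)) : nat :=
  length (filter (fun p => andb (lo <? snd p) (snd p <? hi)) l).

Lemma sumP_app l1 l2 : sumP (l1 ++ l2) = sumP l1 + sumP l2.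
Proof. induction l1; simpl; lia. Qed.

Lemma lterms_app D k0 A1 A2 :
  lterms D k0 (A1 ++ A2) = lterms D (k0 + Z.of_nat (length A2)) A1 ++ lterms D k0 A2.
Proof.
  induction A1 as [|x A1 IH]; simpl; auto.
  rewrite IH, length_app. f_equal. f_equal. f_equal. lia.
Qed.

Lemma lterms_bounds D k0 A p : 0 <= D -> In p (lterms D k0 A) ->
  D * (k0 + 1) <= snd p <= D * (k0 + Z.of_nat (length A)).
Proof.
  intros HD. induction A as [|x A IH]; simpl; [tauto|].
  intros [<-|H]; simpl.
  - split; apply Z.mul_le_mono_nonneg_l; lia.
  - specialize (IH H). split; [lia|]. eapply Z.le_trans; [apply IH|].
    apply Z.mul_le_mono_nonneg_l; lia.
Qed.

Lemma lterms_sorted D k0 A : 0 < D -> StronglySorted dec (lterms D k0 A).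
Proof.
  intros HD. induction A as [|x A IH]; simpl; constructor; auto.
  apply Forall_forall. intros p Hp. unfold dec. simpl.
  pose proof (lterms_bounds D k0 A p ltac:(lia) Hp). nia.
Qed.

Lemma lterms_good d D k0 A : 0 <= k0 -> 0 <= D -> Forall (good d) A ->
  Forall (goodp d) (lterms D k0 A).
Proof.
  intros Hk HD. induction A as [|x A IH]; simpl; auto.
  intros HA. inversion HA; subst. constructor; auto.
  split; simpl; auto. nia.
Qed.

Lemma lterms_last D k0 A : A <> [] ->
  snd (last (lterms D k0 A) (0,0)) = D * (k0 + 1).
Proof.
  induction A as [|x A IH]; intros H; [congruence|].
  destruct A as [|y A].
  - simpl. f_equal.
  - change (lterms D k0 (x :: y :: A)) with ((x, D * (k0 + Z.of_nat (S (length (y::A))))) :: lterms D k0 (y::A)).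
    rewrite <- IH by congruence. simpl. reflexivity.
Qed.

Lemma last_in {T} (l : list T) x0 : l <> [] -> In (last l x0) l.
Proof.
  induction l as [|x l IH]; intros H; [congruence|].
  destruct l as [|y l]; simpl; auto.
  right. apply IH. congruence.
Qed.

Lemma pow3_split m e : 0 <= m <= e -> 3 ^ e = 3 ^ m * 3 ^ (e - m).
Proof. intros. rewrite <- Z.pow_add_r by lia. f_equal. lia. Qed.

Lemma valuation d l : l <> [] -> Forall (goodp d) l -> StronglySorted dec l ->
  exists q, sumP l = 3 ^ (snd (last l (0,0))) * q /\ ~ (3 | q).
Proof.
  induction l as [|x l IH]; intros Hne Hg Hs; [congruence|].
  inversion Hg; subst. inversion Hs; subst.
  destruct l as [|y l].
  - exists (fst x). simpl. split; [lia|]. destruct H1 as [[H _] _]. exact H.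
  - destruct IH as [q [Hq Hnd]]; auto; try congruence.
    set (m := snd (last (y :: l) (0,0))) in *.
    assert (Hin : In (last (y::l) (0,0)) (y::l)) by (apply last_in; congruence).
    assert (Hm : m < snd x) by (rewrite Forall_forall in H4; apply (H4 _ Hin)).
    assert (Hm0 : 0 <= m) by (rewrite Forall_forall in H2; apply (H2 _ Hin)).
    exists (fst x * 3 ^ (snd x - m) + q).
    change (last (x :: y :: l) (0,0)) with (last (y :: l) (0,0)). fold m.
    split.
    + change (sumP (x :: y :: l)) with (fst x * 3 ^ snd x + sumP (y :: l)).
      rewrite Hq, (pow3_split m (snd x)) by lia. ring.
    + intro H. apply Hnd. apply (Z.divide_add_cancel_r _ (fst x * 3 ^ (snd x - m))); auto.
      apply Z.divide_mul_r. rewrite (pow3_split 1 (snd x - m)) by lia.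
      apply Z.divide_mul_l. rewrite Z.pow_1_r. apply Z.divide_refl.
Qed.

Lemma val_eq m m' q q' : 0 <= m -> 0 <= m' -> 3 ^ m * q = 3 ^ m' * q' ->
  ~ (3 | q) -> ~ (3 | q') -> m = m'.
Proof.
  intros H0 H0' Heq Hq Hq'.
  destruct (Z.lt_trichotomy m m') as [Hlt|[Heqm|Hgt]]; auto.
  - exfalso. apply Hq. rewrite (pow3_split m m') in Heq by lia.
    assert (q = 3 ^ (m' - m) * q').
    { apply (Z.mul_reg_l _ _ (3 ^ m)). apply Z.pow_nonzero; lia. rewrite Heq; ring. }
    subst q. apply Z.divide_mul_l. rewrite (pow3_split 1 (m' - m)) by lia.
    apply Z.divide_mul_l. rewrite Z.pow_1_r. apply Z.divide_refl.
  - exfalso. apply Hq'. rewrite (pow3_split m' m) in Heq by lia.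
    assert (q' = 3 ^ (m - m') * q).
    { apply (Z.mul_reg_l _ _ (3 ^ m')). apply Z.pow_nonzero; lia. rewrite <- Heq; ring. }
    subst q'. apply Z.divide_mul_l. rewrite (pow3_split 1 (m - m')) by lia.
    apply Z.divide_mul_l. rewrite Z.pow_1_r. apply Z.divide_refl.
Qed.

Definition ltT (T : Z) (p : Z*Z) := snd p <? T.
Definition geT (T : Z) (p : Z*Z) := T <=? snd p.

Lemma sumP_split T l : sumP l = sumP (filter (ltT T) l) + sumP (filter (geT T) l).
Proof.
  induction l as [|x l IH]; simpl; auto. unfold ltT at 1, geT at 1.
  destruct (Z.ltb_spec (snd x) T); destruct (Z.leb_spec T (snd x)); try lia; simpl; lia.
Qed.

Lemma length_split T l : length l = (length (filter (ltT T) l) + length (filter (geT T) l))%nat.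
Proof.
  induction l as [|x l IH]; simpl; auto. unfold ltT at 1, geT at 1.
  destruct (Z.ltb_spec (snd x) T); destruct (Z.leb_spec T (snd x)); try lia; simpl; lia.
Qed.

Lemma filter_all {T} (f : T -> bool) l : (forall x, In x l -> f x = true) -> filter f l = l.
Proof. induction l as [|x l IH]; simpl; intros H; auto. rewrite H by auto. f_equal. auto. Qed.

Lemma filter_none {T} (f : T -> bool) l : (forall x, In x l -> f x = false) -> filter f l = [].
Proof. induction l as [|x l IH]; simpl; intros H; auto. rewrite H by auto. auto. Qed.

Lemma sorted_split T l : StronglySorted dec l -> l = filter (geT T) l ++ filter (ltT T) l.
Proof.
  induction l as [|x l IH]; intros Hs; simpl; auto.
  inversion Hs; subst.
  destruct (geT T x) eqn:E1; destruct (ltT T x) eqn:E2; unfold geT, ltT in E1, E2;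
    apply Z.leb_le in E1 || apply Z.leb_gt in E1;
    apply Z.ltb_lt in E2 || apply Z.ltb_ge in E2; try lia; simpl.
  - f_equal; auto.
  - rewrite Forall_forall in H2.
    rewrite filter_none, filter_all; auto; intros y Hy; specialize (H2 y Hy); unfold dec in H2;
      unfold geT, ltT. apply Z.ltb_lt; lia. apply Z.leb_gt; lia.
Qed.

Lemma sorted_filter f l : StronglySorted dec l -> StronglySorted dec (filter f l).
Proof.
  induction l as [|x l IH]; intros Hs; simpl; auto. inversion Hs; subst.
  destruct (f x); auto. constructor; auto.
  rewrite Forall_forall in *. intros y Hy. apply filter_In in Hy. apply H2; tauto.
Qed.

Lemma forall_filter {T} P (f : T -> bool) l : Forall P l -> Forall P (filter f l).
Proof. rewrite !Forall_forall. intros H x Hx. apply filter_In in Hx. apply H; tauto. Qed.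

Lemma high_div T l : 0 <= T -> (forall p, In p l -> T <= snd p) -> (3 ^ T | sumP l).
Proof.
  intros HT. induction l as [|x l IH]; intros H; simpl.
  - apply Z.divide_0_r.
  - apply Z.divide_add_r; [|apply IH; intros; apply H; right; auto].
    apply Z.divide_mul_r. rewrite (pow3_split T (snd x)) by (specialize (H x (or_introl eq_refl)); lia).
    apply Z.divide_mul_l. apply Z.divide_refl.
Qed.

Lemma low_bound d l N : 0 <= d -> Forall (goodp d) l -> StronglySorted dec l -> 0 <= N ->
  (forall p, In p l -> snd p < N) -> 0 <= sumP l /\ 2 * sumP l <= d * (3 ^ N - 1).
Proof.
  intros Hd. revert N. induction l as [|x l IH]; intros N Hg Hs HN H.
  - simpl. split; [lia|]. assert (0 < 3 ^ N) by (apply Z.pow_pos_nonneg; lia). nia.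
  - change (sumP (x::l)) with (fst x * 3 ^ snd x + sumP l).
    inversion Hg as [|? ? Hgx Hgl]; subst. inversion Hs as [|? ? Hs' Hdec]; subst.
    destruct Hgx as [[_ Hb] He].
    assert (Hx : snd x < N) by (apply H; left; auto).
    destruct (IH (snd x)) as [IH1 IH2]; auto.
    { intros p Hp. rewrite Forall_forall in Hdec. apply (Hdec p Hp). }
    assert (Hp : 0 < 3 ^ snd x) by (apply Z.pow_pos_nonneg; lia).
    assert (Hp2 : 3 ^ (snd x + 1) <= 3 ^ N) by (apply Z.pow_le_mono_r; lia).
    rewrite Z.pow_add_r, Z.pow_1_r in Hp2 by lia.
    assert (Ha1 : fst x * 3 ^ snd x <= d * 3 ^ snd x) by (apply Z.mul_le_mono_nonneg_r; lia).
    assert (Ha2 : d * (3 ^ snd x * 3) <= d * 3 ^ N) by (apply Z.mul_le_mono_nonneg_l; lia).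
    clear -IH1 IH2 Hb Hp Ha1 Ha2 Hd. revert IH1 IH2 Hb Hp Ha1 Ha2. generalize (3 ^ snd x) (3 ^ N) (sumP l) (fst x).
    intros; split; nia.
Qed.

Lemma gap d T L B c : 1 <= d -> d <= T ->
  Forall (goodp d) L -> StronglySorted dec L -> Forall (goodp d) B -> StronglySorted dec B ->
  (forall p, In p L \/ In p B -> snd p <= T - d \/ T <= snd p) -> Z.abs c <= d ->
  sumP L = sumP B + c ->
  sumP (filter (ltT T) L) = sumP (filter (ltT T) B) + c /\
  sumP (filter (geT T) L) = sumP (filter (geT T) B).
Proof.
  intros Hd HT HgL HsL HgB HsB Hgap Hc Heq.
  rewrite (sumP_split T L), (sumP_split T B) in Heq.
  set (XL := sumP (filter (ltT T) L)) in *. set (XB := sumP (filter (ltT T) B)) in *.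
  set (YL := sumP (filter (geT T) L)) in *. set (YB := sumP (filter (geT T) B)) in *.
  assert (HYL : (3 ^ T | YL)).
  { apply high_div; [lia|]. intros p Hp. apply filter_In in Hp. destruct Hp as [_ Hp].
    unfold geT in Hp. apply Z.leb_le in Hp. auto. }
  assert (HYB : (3 ^ T | YB)).
  { apply high_div; [lia|]. intros p Hp. apply filter_In in Hp. destruct Hp as [_ Hp].
    unfold geT in Hp. apply Z.leb_le in Hp. auto. }
  assert (Hlow : forall l, (forall p, In p l -> snd p <= T - d \/ T <= snd p) ->
     forall p, In p (filter (ltT T) l) -> snd p < T - d + 1).
  { intros l Hl p Hp. apply filter_In in Hp. destruct Hp as [Hp Hp'].
    unfold ltT in Hp'. apply Z.ltb_lt in Hp'. specialize (Hl p Hp). lia. }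
  destruct (low_bound d (filter (ltT T) L) (T - d + 1)) as [BL1 BL2]; try lia.
  { apply forall_filter; auto. } { apply sorted_filter; auto. }
  { apply Hlow. intros; apply Hgap; auto. }
  destruct (low_bound d (filter (ltT T) B) (T - d + 1)) as [BB1 BB2]; try lia.
  { apply forall_filter; auto. } { apply sorted_filter; auto. }
  { apply Hlow. intros; apply Hgap; auto. }
  fold XL in BL1, BL2. fold XB in BB1, BB2.
  assert (HY : (3 ^ T | XB + c - XL)).
  { replace (XB + c - XL) with (YL - YB) by lia. apply Z.divide_sub_r; auto. }
  destruct HY as [k Hk].
  assert (HP : 3 <= 3 ^ (T - d + 1)).
  { rewrite <- (Z.pow_1_r 3) at 1. apply Z.pow_le_mono_r; lia. }
  assert (HQ : d <= 3 ^ (d - 1)).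
  { pose proof (Z.pow_gt_lin_r 3 (d - 1) ltac:(lia) ltac:(lia)). lia. }
  assert (HPQ : 3 ^ T = 3 ^ (T - d + 1) * 3 ^ (d - 1)).
  { rewrite <- Z.pow_add_r by lia. f_equal. lia. }
  rewrite HPQ in Hk.
  set (P := 3 ^ (T - d + 1)) in *. set (Q := 3 ^ (d - 1)) in *.
  assert (k = 0).
  { destruct (Z.lt_trichotomy k 0) as [Hk0|[Hk0|Hk0]]; auto; exfalso.
    - assert (k * (P * Q) <= - (P * Q)) by nia. nia.
    - assert (k * (P * Q) >= P * Q) by nia. nia. }
  subst k. split; lia.
Qed.

Lemma thresh d lo hi B : 1 <= d -> lo + 2 * d <= hi -> (cnt lo hi B <= 1)%nat ->
  exists T, lo + d + 1 <= T <= hi /\ forall p, In p B -> snd p <= T - d \/ T <= snd p.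
Proof.
  intros Hd Hlh Hc. unfold cnt in Hc.
  set (F := filter _ B) in Hc.
  assert (HF : forall p, In p B -> lo < snd p < hi -> In p F).
  { intros p Hp Hw. apply filter_In. split; auto. apply Bool.andb_true_iff.
    split; [apply Z.ltb_lt|apply Z.ltb_lt]; lia. }
  assert (HF2 : forall p, In p F -> lo < snd p < hi).
  { intros p Hp. apply filter_In in Hp. destruct Hp as [_ Hp].
    apply Bool.andb_true_iff in Hp. destruct Hp as [H1 H2].
    apply Z.ltb_lt in H1. apply Z.ltb_lt in H2. lia. }
  destruct F as [|x [|y F']] eqn:EF; simpl in Hc; try lia.
  - exists hi. split; [lia|]. intros p Hp.
    destruct (Z_lt_le_dec lo (snd p)); destruct (Z_lt_le_dec (snd p) hi); try lia.
    exfalso. apply (HF p Hp). lia.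
  - assert (Hx := HF2 x (or_introl eq_refl)).
    destruct (Z_lt_le_dec (lo + d) (snd x)).
    + exists (snd x). split; [lia|]. intros p Hp.
      destruct (Z_lt_le_dec lo (snd p)); destruct (Z_lt_le_dec (snd p) hi); try lia.
      destruct (HF p Hp ltac:(lia)) as [<-|[]]. lia.
    + exists hi. split; [lia|]. intros p Hp.
      destruct (Z_lt_le_dec lo (snd p)); destruct (Z_lt_le_dec (snd p) hi); try lia.
      destruct (HF p Hp ltac:(lia)) as [<-|[]]. lia.
Qed.

Lemma filter_disj {T} (f g h : T -> bool) l :
  (forall x, In x l -> f x = true -> g x = true -> False) ->
  (forall x, In x l -> f x = true \/ g x = true -> h x = true) ->
  (length (filter f l) + length (filter g l) <= length (filter h l))%nat.
Proof.
  induction l as [|x l IH]; intros H1 H2; simpl; auto.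
  assert (IH' := IH (fun y Hy => H1 y (or_intror Hy)) (fun y Hy => H2 y (or_intror Hy))).
  destruct (f x) eqn:Ef; destruct (g x) eqn:Eg.
  - exfalso; eapply H1; eauto. left; auto.
  - rewrite (H2 x (or_introl eq_refl) (or_introl Ef)). simpl; lia.
  - rewrite (H2 x (or_introl eq_refl) (or_intror Eg)). simpl; lia.
  - destruct (h x); simpl; lia.
Qed.

Lemma filter_one {T} (f : T -> bool) l x : In x l -> f x = true -> (1 <= length (filter f l))%nat.
Proof.
  intros Hx Hf. destruct (filter f l) eqn:E; simpl; try lia.
  assert (In x (filter f l)) by (apply filter_In; auto). rewrite E in H; destruct H.
Qed.

Lemma cnt_chain E D B : 0 <= D -> forall m : nat,
  (forall j : nat, (1 <= j <= m)%nat -> (2 <= cnt (E + (Z.of_nat j - 1) * D) (E + Z.of_nat j * D) B)%nat) ->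
  (2 * m <= cnt E (E + Z.of_nat m * D) B)%nat.
Proof.
  intros HD. induction m as [|m IH]; intros H; [lia|].
  assert (H1 := IH (fun j Hj => H j ltac:(lia))).
  assert (H2 := H (S m) ltac:(lia)).
  replace (Z.of_nat (S m) - 1) with (Z.of_nat m) in H2 by lia.
  unfold cnt in *.
  eapply Nat.le_trans; [|apply filter_disj].
  - instantiate (1 := fun p => andb (E + Z.of_nat m * D <? snd p) (snd p <? E + Z.of_nat (S m) * D)).
    instantiate (1 := fun p => andb (E <? snd p) (snd p <? E + Z.of_nat m * D)). lia.
  - intros x _ Hf Hg. apply Bool.andb_true_iff in Hf, Hg.
    destruct Hf as [_ Hf]; destruct Hg as [Hg _]. apply Z.ltb_lt in Hf, Hg. lia.
  - intros x _ [Hf|Hf]; apply Bool.andb_true_iff in Hf; destruct Hf as [Hf Hf'];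
      apply Z.ltb_lt in Hf, Hf'; apply Bool.andb_true_iff; split; apply Z.ltb_lt; nia.
Qed.

Lemma lterms_good_sorted d k0 A : 1 <= d -> 0 <= k0 -> Forall (good d) A ->
  Forall (goodp d) (lterms (2*d) k0 A) /\ StronglySorted dec (lterms (2*d) k0 A).
Proof. intros. split; [apply lterms_good; auto; lia | apply lterms_sorted; lia]. Qed.

Lemma main d : 1 <= d -> forall r A k0 c B, length A = r -> 0 <= k0 ->
  Forall (good d) A -> Forall (goodp d) B -> StronglySorted dec B -> Z.abs c <= d ->
  sumP (lterms (2*d) k0 A) = sumP B + c ->
  (r <= length B)%nat /\ (length B = r -> c = 0 /\ B = lterms (2*d) k0 A).
Proof.
  intros Hd r. induction r as [r IH] using lt_wf_ind.
  intros A k0 c B HA Hk0 HgA HgB HsB Hc Heq.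
  destruct (lterms_good_sorted d k0 A Hd Hk0 HgA) as [HgL HsL].
  set (D := 2 * d) in *. set (E := D * (k0 + 1)).
  assert (HE : 2 * d <= E) by (unfold E, D; nia).
  destruct r as [|r'].
  - apply length_zero_iff_nil in HA. subst A. simpl in Heq.
    split; [lia|]. intros HB. apply length_zero_iff_nil in HB. subst B. simpl in *. auto.
  - set (r := S r') in *.
    assert (HLb : forall p, In p (lterms D k0 A) -> E <= snd p <= D * (k0 + Z.of_nat r)).
    { intros p Hp. rewrite <- HA. apply lterms_bounds; auto; lia. }
    destruct (classic (exists j, (1 <= j <= r - 1)%nat /\
        (cnt (E + (Z.of_nat j - 1) * D) (E + Z.of_nat j * D) B <= 1)%nat)) as [[j [Hj Hcnt]]|Hno].
    +
      destruct (thresh d (E + (Z.of_nat j - 1) * D) (E + Z.of_nat j * D) B Hd ltac:(unfold D; lia) Hcnt)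
        as [T [HT HTB]].
      set (A1 := firstn (r - j) A). set (A2 := skipn (r - j) A).
      assert (HA12 : A = A1 ++ A2) by (symmetry; apply firstn_skipn).
      assert (HlA1 : length A1 = (r - j)%nat) by (unfold A1; rewrite length_firstn; lia).
      assert (HlA2 : length A2 = j) by (unfold A2; rewrite length_skipn; lia).
      assert (HLsplit : lterms D k0 A = lterms D (k0 + Z.of_nat j) A1 ++ lterms D k0 A2)
        by (rewrite HA12, lterms_app, HlA2; auto).
      assert (HgA1 : Forall (good d) A1) by (rewrite HA12 in HgA; apply Forall_app in HgA; tauto).
      assert (HgA2 : Forall (good d) A2) by (rewrite HA12 in HgA; apply Forall_app in HgA; tauto).
      assert (HU : forall p, In p (lterms D (k0 + Z.of_nat j) A1) -> E + Z.of_nat j * D <= snd p).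
      { intros p Hp. apply lterms_bounds in Hp; [|unfold D; lia]. unfold E. nia. }
      assert (HLo : forall p, In p (lterms D k0 A2) -> snd p <= E + (Z.of_nat j - 1) * D).
      { intros p Hp. apply lterms_bounds in Hp; [|unfold D; lia]. rewrite HlA2 in Hp. unfold E. nia. }
      destruct (gap d T (lterms D k0 A) B c) as [Glow Ghigh]; auto.
      { unfold D in *; nia. }
      { intros p [Hp|Hp]; auto. rewrite HLsplit in Hp. apply in_app_or in Hp.
        destruct Hp as [Hp|Hp]; [apply HU in Hp | apply HLo in Hp]; lia. }
      assert (FL : filter (ltT T) (lterms D k0 A) = lterms D k0 A2).
      { rewrite HLsplit, filter_app, filter_none, filter_all; auto.
        - intros p Hp. apply HLo in Hp. unfold ltT. apply Z.ltb_lt. lia.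
        - intros p Hp. apply HU in Hp. unfold ltT. apply Z.ltb_ge. lia. }
      assert (FH : filter (geT T) (lterms D k0 A) = lterms D (k0 + Z.of_nat j) A1).
      { rewrite HLsplit, filter_app, filter_all, (filter_none _ (lterms D k0 A2)), app_nil_r; auto.
        - intros p Hp. apply HLo in Hp. unfold geT. apply Z.leb_gt. lia.
        - intros p Hp. apply HU in Hp. unfold geT. apply Z.leb_le. lia. }
      rewrite FL in Glow. rewrite FH in Ghigh.
      destruct (IH j ltac:(lia) A2 k0 c (filter (ltT T) B)) as [I1 I2]; auto.
      { apply forall_filter; auto. } { apply sorted_filter; auto. }
      destruct (IH (r - j)%nat ltac:(lia) A1 (k0 + Z.of_nat j) 0 (filter (geT T) B)) as [J1 J2]; auto.
      { lia. } { apply forall_filter; auto. } { apply sorted_filter; auto. } { lia. } { lia. }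
      pose proof (length_split T B) as HlB.
      split; [lia|]. intros HB.
      destruct (I2 ltac:(lia)) as [Hc0 HBl]. destruct (J2 ltac:(lia)) as [_ HBh].
      split; auto. rewrite (sorted_split T B HsB), HBl, HBh, HLsplit. reflexivity.
    + assert (Hall : forall j, (1 <= j <= r - 1)%nat ->
          (2 <= cnt (E + (Z.of_nat j - 1) * D) (E + Z.of_nat j * D) B)%nat).
      { intros j Hj. destruct (le_lt_dec 2 (cnt (E + (Z.of_nat j - 1) * D) (E + Z.of_nat j * D) B)); auto.
        exfalso. apply Hno. exists j. split; auto; lia. }
      assert (Hch := cnt_chain E D B ltac:(unfold D; lia) (r - 1)%nat Hall).
      destruct (le_lt_dec (cnt (-1) E B) 1) as [Hw0|Hw0].
      * destruct (thresh d (-1) E B Hd ltac:(lia) Hw0) as [T [HT HTB]].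
        destruct (gap d T (lterms D k0 A) B c) as [Glow Ghigh]; auto.
        { lia. }
        { intros p [Hp|Hp]; auto. apply HLb in Hp. lia. }
        rewrite filter_none in Glow.
        2:{ intros p Hp. apply HLb in Hp. unfold ltT. apply Z.ltb_ge. lia. }
        rewrite filter_all in Ghigh.
        2:{ intros p Hp. apply HLb in Hp. unfold geT. apply Z.leb_le. lia. }
        simpl in Glow.
        assert (HAne : A <> []) by (intro; subst A; simpl in HA; lia).
        assert (HLne : lterms D k0 A <> []) by (destruct A; simpl; congruence).
        destruct (valuation d (lterms D k0 A)) as [qL [HqL HqLn]]; auto.
        unfold D in HqL. rewrite lterms_last in HqL by auto. fold D E in HqL.
        set (Bh := filter (geT T) B) in *.
        assert (HgBh : Forall (goodp d) Bh) by (apply forall_filter; auto).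
        assert (HsBh : StronglySorted dec Bh) by (apply sorted_filter; auto).
        assert (HBhne : Bh <> []).
        { intro HN. rewrite HN in Ghigh. simpl in Ghigh. rewrite HqL in Ghigh.
          apply HqLn. assert (qL = 0).
          { apply (Z.mul_reg_l _ _ (3 ^ E)). apply Z.pow_nonzero; lia. lia. }
          subst. apply Z.divide_0_r. }
        destruct (valuation d Bh) as [qB [HqB HqBn]]; auto.
        assert (HinB := last_in Bh (0,0) HBhne).
        assert (Hm0 : 0 <= snd (last Bh (0,0))).
        { rewrite Forall_forall in HgBh. apply (HgBh _ HinB). }
        assert (HmE : E = snd (last Bh (0,0))).
        { apply (val_eq _ _ qL qB); auto; try lia; try (rewrite <- HqL, <- HqB; auto). }
        assert (HinB' : In (last Bh (0,0)) B) by (apply filter_In in HinB; tauto).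
        pose proof (length_split T B) as HlB. fold Bh in HlB.
        assert (HlBh : (1 <= length Bh)%nat) by (destruct Bh; simpl; [congruence|lia]).
        destruct (Nat.eq_dec r 1) as [Hr1|Hr1].
        -- split; [lia|]. intros HB.
           assert (Hlo0 : length (filter (ltT T) B) = 0%nat) by lia.
           apply length_zero_iff_nil in Hlo0. rewrite Hlo0 in Glow. simpl in Glow.
           assert (Hc0 : c = 0) by lia. split; auto.
           rewrite (sorted_split T B HsB), Hlo0, app_nil_r. fold Bh.
           destruct A as [|α [|? ?]]; simpl in HA; try lia.
           destruct Bh as [|x [|? ?]]; simpl in HlBh; try congruence.
           2:{ exfalso. simpl in HlB. lia. }
           simpl in HmE. simpl. destruct x as [bx ex]. cbn [fst snd] in HmE. subst ex.
           f_equal. f_equal.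
           simpl in Ghigh.
           replace (D * (k0 + 1)) with E in Ghigh by (unfold E; reflexivity).
           symmetry. apply (Z.mul_reg_r _ _ (3 ^ E)); [apply Z.pow_nonzero; lia|lia].
        -- assert (Hcnt : (1 + 2 * (r - 1) <= length B)%nat).
           { eapply Nat.le_trans; [|apply (filter_length_le (fun _ => true))].
             eapply Nat.le_trans; [|apply (filter_disj (fun p => snd p =? E)
                (fun p => andb (E <? snd p) (snd p <? E + Z.of_nat (r - 1) * D)))].
             - unfold cnt in Hch.
               pose proof (filter_one (fun p => snd p =? E) B _ HinB' ltac:(apply Z.eqb_eq; lia)).
               lia.
             - intros x _ H1 H2. apply Z.eqb_eq in H1. apply Bool.andb_true_iff in H2.
               destruct H2 as [H2 _]. apply Z.ltb_lt in H2. lia.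
             - auto. }
           split; [lia|]. intros HB. exfalso. lia.
      * split.
        -- assert (Hcnt : (2 + 2 * (r - 1) <= length B)%nat).
           { eapply Nat.le_trans; [|apply (filter_length_le (fun _ => true))].
             eapply Nat.le_trans; [|apply (filter_disj (fun p => andb (-1 <? snd p) (snd p <? E))
                (fun p => andb (E <? snd p) (snd p <? E + Z.of_nat (r - 1) * D)))].
             - unfold cnt in Hch, Hw0. lia.
             - intros x _ H1 H2. apply Bool.andb_true_iff in H1, H2.
               destruct H2 as [H2 _]. destruct H1 as [_ H1]. apply Z.ltb_lt in H1, H2. lia.
             - auto. }
           lia.
        -- intros HB. exfalso.
           assert (Hcnt : (2 + 2 * (r - 1) <= length B)%nat).
           { eapply Nat.le_trans; [|apply (filter_length_le (fun _ => true))].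
             eapply Nat.le_trans; [|apply (filter_disj (fun p => andb (-1 <? snd p) (snd p <? E))
                (fun p => andb (E <? snd p) (snd p <? E + Z.of_nat (r - 1) * D)))].
             - unfold cnt in Hch, Hw0. lia.
             - intros x _ H1 H2. apply Bool.andb_true_iff in H1, H2.
               destruct H2 as [H2 _]. destruct H1 as [_ H1]. apply Z.ltb_lt in H1, H2. lia.
             - auto. }
           lia.
Qed.

Lemma zsum_seq f m : zsum f m = fold_right Z.add 0 (map f (seq 1 m)).
Proof.
  induction m as [|m IH]; [reflexivity|].
  cbn [zsum]. rewrite seq_S, map_app, fold_right_app. simpl. rewrite IH.
  replace (1 + m)%nat with (S m) by lia.
  generalize (map f (seq 1 m)). intros l.
  induction l; simpl; lia.
Qed.

Lemma sumP_map {T} (u : T -> Z) v l :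
  sumP (map (fun i => (u i, v i)) l) = fold_right Z.add 0 (map (fun i => u i * 3 ^ (v i)) l).
Proof. induction l; simpl; auto. rewrite IHl. reflexivity. Qed.

Lemma lterms_map D k0 (a : nat -> Z) m : forall st,
  lterms D k0 (map a (seq st m)) = map (fun i => (a i, D * (k0 + Z.of_nat (st + m - i)))) (seq st m).
Proof.
  induction m as [|m IH]; intros st; simpl; auto.
  rewrite IH, length_map, length_seq. f_equal.
  - f_equal. f_equal. f_equal. lia.
  - apply map_ext_in. intros i Hi. apply in_seq in Hi. f_equal. f_equal. f_equal. f_equal. lia.
Qed.

Lemma map_eq_in {T U} (f g : T -> U) l x : map f l = map g l -> In x l -> f x = g x.
Proof.
  induction l; simpl; intros H Hx; [destruct Hx|]. injection H; intros.
  destruct Hx; subst; auto.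
Qed.

Theorem lemma2p2 (d r s : nat) (c : Z) (a b : nat -> Z) (n : nat -> Z) :
  (0 < d)%nat -> (0 < r)%nat -> (0 < s)%nat -> (s <= r)%nat ->
  Z.abs c <= Z.of_nat d ->
  (forall i, (1 <= i <= r)%nat ->
     ~ (3 | a i) /\ 1 <= a i <= Z.of_nat d) ->
  (forall i, (1 <= i <= s)%nat ->
     ~ (3 | b i) /\ 1 <= b i <= Z.of_nat d) ->
  (forall i, (1 <= i < s)%nat -> n i > n (S i)) ->
  n s >= 0 ->
  zsum (fun i => a i * 3 ^ (2 * Z.of_nat (r + 1 - i) * Z.of_nat d)) r
    = zsum (fun i => b i * 3 ^ (n i)) s + c ->
  r = s /\ c = 0 /\
  (forall i, (1 <= i <= r)%nat ->
     a i = b i /\ n i = 2 * Z.of_nat d * Z.of_nat (r + 1 - i)).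
Proof.
  intros Hd Hr Hs Hsr Hc Ha Hb Hn Hns Heq.
  assert (Hdec : forall i j, (1 <= i)%nat -> (i < j)%nat -> (j <= s)%nat -> n i > n j).
  { intros i j Hi Hij. induction j as [|j IH]; [lia|]. intros Hj.
    destruct (Nat.eq_dec i j) as [->|Hne].
    - apply Hn; lia.
    - assert (n j > n (S j)) by (apply Hn; lia). specialize (IH ltac:(lia) ltac:(lia)). lia. }
  assert (Hnn : forall i, (1 <= i <= s)%nat -> 0 <= n i).
  { intros i Hi. destruct (Nat.eq_dec i s) as [->|Hne]; [lia|].
    specialize (Hdec i s ltac:(lia) ltac:(lia) ltac:(lia)). lia. }
  set (A := map a (seq 1 r)).
  set (B := map (fun j => (b j, n j)) (seq 1 s)).
  assert (HL : lterms (2 * Z.of_nat d) 0 A =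
     map (fun i => (a i, 2 * Z.of_nat d * (0 + Z.of_nat (1 + r - i)))) (seq 1 r))
    by (apply lterms_map).
  destruct (main (Z.of_nat d) ltac:(lia) r A 0 c B) as [M1 M2].
  - unfold A. rewrite length_map, length_seq. auto.
  - lia.
  - apply Forall_forall. intros x Hx. unfold A in Hx. apply in_map_iff in Hx.
    destruct Hx as [i [<- Hi]]. apply in_seq in Hi. apply Ha. lia.
  - apply Forall_forall. intros x Hx. unfold B in Hx. apply in_map_iff in Hx.
    destruct Hx as [i [<- Hi]]. apply in_seq in Hi. split; simpl; [apply Hb|apply Hnn]; lia.
  - unfold B. assert (Hgen : forall st m, (1 <= st)%nat -> (st + m <= s + 1)%nat ->
        StronglySorted dec (map (fun j => (b j, n j)) (seq st m))).
    { intros st m. revert st. induction m as [|m IH]; intros st H1 H2; simpl; constructor.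
      - apply IH; lia.
      - apply Forall_forall. intros x Hx. apply in_map_iff in Hx.
        destruct Hx as [i [<- Hi]]. apply in_seq in Hi. unfold dec. simpl.
        apply Z.gt_lt. apply Hdec; lia. }
    apply Hgen; lia.
  - lia.
  - rewrite HL. unfold B. rewrite !sumP_map. rewrite !zsum_seq in Heq. rewrite <- Heq.
    f_equal. apply map_ext_in. intros i Hi. apply in_seq in Hi. f_equal.
    replace (1 + r - i)%nat with (r + 1 - i)%nat by lia. f_equal. ring.
  - assert (HlB : length B = s) by (unfold B; rewrite length_map, length_seq; auto).
    rewrite HlB in M1, M2. assert (Hrs : s = r) by lia.
    destruct (M2 Hrs) as [Hc0 HBL]. split; [lia|]. split; auto.
    intros i Hi. rewrite HL in HBL. unfold B in HBL. rewrite Hrs in HBL.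
    assert (Hin : In i (seq 1 r)) by (apply in_seq; lia).
    pose proof (map_eq_in _ _ _ i HBL Hin) as E.
    assert (E1 : n i = 2 * Z.of_nat d * (0 + Z.of_nat (1 + r - i))) by exact (f_equal snd E).
    assert (E2 : b i = a i) by exact (f_equal fst E).
    split; [lia|]. replace (1 + r - i)%nat with (r + 1 - i)%nat in * by lia. rewrite ?E1, ?E2. ring.
Qed.
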